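(* Let $N\ge2$, $h=1/N$, and index vectors $Z\in\mathbb{R}^{(N+1)^2}$ by grid points $(x_i,y_j)=(ih,jh)$, $0\le i,j\le N$, writing $z_{i,j}$ for the components; let $Z_I\in\mathbb{R}^{(N-1)^2}$ denote the components at interior points $1\le i,j\le N-1$. Let $\mathcal{L}_h:\mathbb{R}^{(N+1)^2}\to\mathbb{R}^{(N-1)^2}$ be the five-point operator $$(\mathcal{L}_hZ)_{i,j}=-\frac{z_{i-1,j}+z_{i+1,j}-4z_{i,j}+z_{i,j-1}+z_{i,j+1}}{h^2},\quad 1\le i,j\le N-1.$$ Let $\beta>0$ and $\Phi,\Psi\in\mathbb{R}^{(N+1)^2}$ satisfy $$\mathcal{L}_h\Psi=-\beta\Phi_I,\qquad \mathcal{L}_h\Phi=\Psi_I .$$ Then $\mathcal{L}_h(\Psi^2+\beta\Phi^2)\le 0$ componentwise, where $\Psi^2,\Phi^2$ denote componentwise squares. *)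

(* Defs.v *)
From mathcomp Require Import all_boot all_order all_algebra.
Set Implicit Arguments. Unset Strict Implicit. Unset Printing Implicit Defensive.
Import Order.TTheory GRing.Theory Num.Theory.
Local Open Scope ring_scope.

(* Grid vectors Z in R^{(N+1)^2}: matrices indexed by 'I_(N+1) x 'I_(N+1),
   z_{i,j} = Z i j at the grid point (ih, jh). *)

(* component z_{i,j} for natural indices i j <= N (inord is the identity there) *)
Definition gcomp {R : ringType} (N : nat) (Z : 'M[R]_(N.+1)) (i j : nat) : R :=
  Z (inord i) (inord j).

Definition interior (N i : nat) : bool := (1 <= i <= N.-1)%N.

(* five-point operator (L_h Z)_{i,j} with h = 1/N, meaningful for interior i j *)
Definition Lh {R : fieldType} (N : nat) (Z : 'M[R]_(N.+1)) (i j : nat) : R :=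
  let h := (N%:R)^-1 in
  - (gcomp Z i.-1 j + gcomp Z i.+1 j - 4 * gcomp Z i j
     + gcomp Z i j.-1 + gcomp Z i j.+1) / (h ^+ 2).

Definition sqv {R : ringType} (N : nat) (Z : 'M[R]_(N.+1)) : 'M[R]_(N.+1) :=
  map_mx (fun x => x ^+ 2) Z.

(* Main.v *)
Require Import Defs.
From mathcomp Require Import all_boot all_order all_algebra.
From mathcomp Require Import ring lra.
Import Order.TTheory GRing.Theory Num.Theory.
Local Open Scope ring_scope.

Theorem lemma4p1 (R : realFieldType) (N : nat) (HN : (2 <= N)%N)
  (beta : R) (Hbeta : 0 < beta) (Phi Psi : 'M[R]_(N.+1))
  (H1 : forall i j : nat, interior N i -> interior N j ->
          Lh Psi i j = - beta * gcomp Phi i j)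
  (H2 : forall i j : nat, interior N i -> interior N j ->
          Lh Phi i j = gcomp Psi i j) :
  forall i j : nat, interior N i -> interior N j ->
    Lh (sqv Psi + beta *: sqv Phi) i j <= 0.
Proof.
move=> i j Hi Hj.
have := H1 i j Hi Hj; have := H2 i j Hi Hj.
have gE : forall a b, gcomp (sqv Psi + beta *: sqv Phi) a b =
   gcomp Psi a b ^+ 2 + beta * gcomp Phi a b ^+ 2.
  by move=> a b; rewrite /gcomp !mxE.
rewrite /Lh !gE.
have hpos : 0 < (N%:R^-1 : R) ^+ 2.
  by rewrite exprn_gt0 // invr_gt0 ltr0n; apply: leq_trans HN.
move: hpos; set k := (N%:R^-1 : R) ^+ 2 => hpos.
set p1 := gcomp Psi i.-1 j; set p2 := gcomp Psi i.+1 j; set p0 := gcomp Psi i j.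
set p3 := gcomp Psi i j.-1; set p4 := gcomp Psi i j.+1.
set f1 := gcomp Phi i.-1 j; set f2 := gcomp Phi i.+1 j; set f0 := gcomp Phi i j.
set f3 := gcomp Phi i j.-1; set f4 := gcomp Phi i j.+1.
move=> E2 E1; clearbody k p0 p1 p2 p3 p4 f0 f1 f2 f3 f4.
have kn : k != 0 by rewrite gt_eqF.
have A : p1 + p2 - 4 * p0 + p3 + p4 = beta * f0 * k.
  have -> : p1 + p2 - 4 * p0 + p3 + p4 = - (- (p1 + p2 - 4 * p0 + p3 + p4) / k) * k
    by field.
  by rewrite E1; ring.
have B : f1 + f2 - 4 * f0 + f3 + f4 = - p0 * k.
  have -> : f1 + f2 - 4 * f0 + f3 + f4 = - ((- (f1 + f2 - 4 * f0 + f3 + f4) / k) * k)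
    by field.
  by rewrite E2; ring.
set S := (X in - X / k).
have -> : S = ((p1 - p0) ^+ 2 + (p2 - p0) ^+ 2 + (p3 - p0) ^+ 2 + (p4 - p0) ^+ 2)
   + beta * ((f1 - f0) ^+ 2 + (f2 - f0) ^+ 2 + (f3 - f0) ^+ 2 + (f4 - f0) ^+ 2)
   + 2 * p0 * ((p1 + p2 - 4 * p0 + p3 + p4) - beta * f0 * k)
   + 2 * beta * f0 * ((f1 + f2 - 4 * f0 + f3 + f4) + p0 * k).
  rewrite /S; ring.
rewrite A B subrr mulr0 addr0 (_ : - p0 * k + p0 * k = 0) ?mulr0 ?addr0; last by ring.
rewrite mulNr oppr_le0 divr_ge0 ?(ltW hpos) //.
apply: addr_ge0; first by rewrite !addr_ge0 // sqr_ge0.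
by apply: mulr_ge0; [exact: ltW | rewrite !addr_ge0 // sqr_ge0].
Qed.
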